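(* Let $G$ and $H$ be cyclically orderable graphs with $|V(G)|=|V(H)|$ and $|E(G)|=|E(H)|$. Then for any $u\in V(G)$ and $v\in V(H)$, the series composition $G\oplus H$ obtained by gluing $u$ and $v$ is cyclically orderable.
   Context: A cyclic base ordering (CBO) of a connected graph $G$ is a bijection $\mathcal{O}:E(G)\to\{1,\dots,|E(G)|\}$ such that for every $i\in\{1,\dots,|E(G)|\}$ the edges $\mathcal{O}^{-1}(i),\dots,\mathcal{O}^{-1}(i+|V(G)|-2)$ (indices taken cyclically modulo $|E(G)|$) induce a spanning tree of $G$; $G$ is cyclically orderable if it has a CBO. Given graphs $G$ and $H$ (vertex-disjoint) with $u\in V(G)$ and $v\in V(H)$, the series composition (1-sum) $G\oplus H$ is the graph obtained from the disjoint union of $G$ and $H$ by identifying $u$ and $v$ into a single vertex. *)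

(* Defs.v *)
(* Graphs are finite multigraphs (loops allowed in the
   representation; a loop can never lie in a spanning tree). *)
From mathcomp Require Import all_boot.
Set Implicit Arguments. Unset Strict Implicit. Unset Printing Implicit Defensive.

Section Graphs.
Variables (V E : finType) (ends : E -> V * V).

Definition adjF (F : {set E}) : rel V :=
  fun x y => [exists e in F, (ends e == (x, y)) || (ends e == (y, x))].

Definition connectedF (F : {set E}) : bool :=
  [forall x, forall y, connect (adjF F) x y].

Definition acyclicF (F : {set E}) : bool :=
  [forall e in F, ~~ connect (adjF (F :\ e)) (ends e).1 (ends e).2].

Definition spanning_tree (F : {set E}) : bool := connectedF F && acyclicF F.

Definition connected_graph : bool := connectedF [set: E].

(* The window of |V|-1 cyclically consecutive positions starting at position i
   (positions 0..m-1 here instead of 1..m). *)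
Definition cbo_window (O : E -> 'I_#|E|) (i : 'I_#|E|) : {set E} :=
  [set e | (O e + #|E| - i) %% #|E| < #|V|.-1].

Definition is_CBO (O : E -> 'I_#|E|) : Prop :=
  bijective O /\ forall i : 'I_#|E|, spanning_tree (cbo_window O i).

Definition cyclically_orderable : Prop :=
  connected_graph /\ exists O : E -> 'I_#|E|, is_CBO O.
End Graphs.

(* Series composition (1-sum): disjoint union of G and H with u and v
   identified. Vertex set: V(G) + (V(H) \ {v}); v is mapped to u. *)
Section Glue.
Variables (V1 E1 V2 E2 : finType) (ends1 : E1 -> V1 * V1)
          (ends2 : E2 -> V2 * V2) (u : V1) (v : V2).

Definition glueV : finType := (V1 + {x : V2 | x != v})%type.

Definition glue_map2 (x : V2) : glueV :=
  match insub x with Some y => inr y | None => inl u end.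

Definition glue_ends (e : (E1 + E2)%type) : glueV * glueV :=
  match e with
  | inl e1 => (inl (ends1 e1).1, inl (ends1 e1).2)
  | inr e2 => (glue_map2 (ends2 e2).1, glue_map2 (ends2 e2).2)
  end.
End Glue.

(* Main.v *)
Require Import Defs.
From mathcomp Require Import all_boot.
From mathcomp Require Import zify.
Set Implicit Arguments. Unset Strict Implicit. Unset Printing Implicit Defensive.

Lemma connect_map (A B : finType) (f : A -> B) (e : rel A) (e' : rel B) :
  (forall x y, e x y -> connect e' (f x) (f y)) ->
  forall x y, connect e x y -> connect e' (f x) (f y).
Proof.
move=> H x y /connectP [p]; elim: p x => [|z p IH] x /=; first by move=> _ ->.
by move=> /andP [exz pz] ly; apply: connect_trans (H _ _ exz) (IH _ pz ly).
Qed.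

Lemma adj_edge (V E : finType) (ends : E -> V * V) (F : {set E}) e :
  e \in F -> adjF ends F (ends e).1 (ends e).2 /\ adjF ends F (ends e).2 (ends e).1.
Proof.
move=> eF; split; apply/existsP; exists e; rewrite eF /=.
  by rewrite -surjective_pairing eqxx.
by rewrite -surjective_pairing eqxx orbT.
Qed.

Lemma adj_inv (V E : finType) (ends : E -> V * V) (F : {set E}) x y :
  adjF ends F x y -> exists2 e, e \in F &
    (x = (ends e).1 /\ y = (ends e).2) \/ (x = (ends e).2 /\ y = (ends e).1).
Proof.
case/existsP => e /andP [eF /orP [] /eqP Ee]; exists e => //; rewrite Ee /=; by [left|right].
Qed.

Lemma glue_map2_val (V1 V2 : finType) (u : V1) (v : V2) (y : {x : V2 | x != v}) :
  glue_map2 u v (val y) = inr y.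
Proof. by rewrite /glue_map2 valK. Qed.

Lemma glue_map2_v (V1 V2 : finType) (u : V1) (v : V2) :
  glue_map2 u v v = inl u.
Proof. by rewrite /glue_map2 insubF // eqxx. Qed.

Definition p1 (V1 V2 : finType) (u : V1) (v : V2) (x : glueV V1 v) : V1 :=
  match x with inl a => a | inr _ => u end.
Definition p2 (V1 V2 : finType) (u : V1) (v : V2) (x : glueV V1 v) : V2 :=
  match x with inl _ => v | inr y => val y end.

Lemma p1_map2 (V1 V2 : finType) (u : V1) (v : V2) x : p1 u (glue_map2 u v x) = u.
Proof. by rewrite /glue_map2; case: insubP. Qed.

Lemma p2_map2 (V1 V2 : finType) (u : V1) (v : V2) x : p2 u (glue_map2 u v x) = x.
Proof.
rewrite /glue_map2; case: insubP => [y _ <- //|].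
by move/negbNE/eqP => ->.
Qed.

Section GlueProofs.
Variables (V1 E1 V2 E2 : finType) (ends1 : E1 -> V1 * V1)
          (ends2 : E2 -> V2 * V2) (u : V1) (v : V2).
Local Notation G := (glue_ends ends1 ends2 u v).

Lemma adj_l (F : {set (E1 + E2)%type}) (F1 : {set E1}) x y :
  (forall e, e \in F1 -> inl e \in F) ->
  adjF ends1 F1 x y -> adjF G F (inl x) (inl y).
Proof.
move=> sub /existsP [e /andP [eF H]]; apply/existsP; exists (inl e).
rewrite sub //=; case/orP: H => /eqP -> /=; by rewrite eqxx ?orbT.
Qed.

Lemma adj_r (F : {set (E1 + E2)%type}) (F2 : {set E2}) x y :
  (forall e, e \in F2 -> inr e \in F) ->
  adjF ends2 F2 x y -> adjF G F (glue_map2 u v x) (glue_map2 u v y).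
Proof.
move=> sub /existsP [e /andP [eF H]]; apply/existsP; exists (inr e).
rewrite sub //=; case/orP: H => /eqP -> /=; by rewrite eqxx ?orbT.
Qed.

Lemma glue_conn (F : {set (E1 + E2)%type}) (F1 : {set E1}) (F2 : {set E2}) :
  (forall e, e \in F1 -> inl e \in F) ->
  (forall e, e \in F2 -> inr e \in F) ->
  connectedF ends1 F1 -> connectedF ends2 F2 -> connectedF G F.
Proof.
move=> s1 s2 /forallP c1 /forallP c2.
have L : forall a b, connect (adjF ends1 F1) a b -> connect (adjF G F) (inl a) (inl b).
  by apply: (connect_map (f := inl)) => a b h; apply: connect1; apply: adj_l h.
have R : forall a b, connect (adjF ends2 F2) a b ->
   connect (adjF G F) (glue_map2 u v a) (glue_map2 u v b).
  by apply: connect_map => a b h; apply: connect1; apply: adj_r h.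
have to : forall x, connect (adjF G F) x (inl u).
  case=> [a|y]; first by apply: L; move/forallP: (c1 a).
  by rewrite -(glue_map2_val u) -(glue_map2_v u v); apply: R; move/forallP: (c2 (val y)).
have from : forall x, connect (adjF G F) (inl u) x.
  case=> [a|y]; first by apply: L; move/forallP: (c1 u).
  by rewrite -(glue_map2_val u) -(glue_map2_v u v); apply: R; move/forallP: (c2 v).
by apply/forallP => x; apply/forallP => y; apply: connect_trans (to x) (from y).
Qed.

Lemma glue_tree (F : {set (E1 + E2)%type}) (F1 : {set E1}) (F2 : {set E2}) :
  (forall e, (inl e \in F) = (e \in F1)) ->
  (forall e, (inr e \in F) = (e \in F2)) ->
  spanning_tree ends1 F1 -> spanning_tree ends2 F2 -> spanning_tree G F.
Proof.
move=> h1 h2 /andP [c1 /forallP a1] /andP [c2 /forallP a2].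
apply/andP; split.
  by apply: (glue_conn (F1 := F1) (F2 := F2)) => // e; rewrite ?h1 ?h2.
apply/forallP => [[e|e]]; apply/implyP.
- rewrite h1 => eF; move/implyP: (a1 e) => /(_ eF) nc; apply/negP => C.
  move/negP: nc; apply.
  have := connect_map (f := @p1 _ _ u v) (e' := adjF ends1 (F1 :\ e)) _ C; apply.
  move=> x y /adj_inv [[f|f]]; rewrite inE => /andP [ne fF] [[-> ->]|[-> ->]] /=.
  + apply: connect1; apply: (proj1 (adj_edge ends1 _)).
    by rewrite !inE -h1 fF andbT; apply: contraNneq ne => ->; rewrite inE.
  + apply: connect1; apply: (proj2 (adj_edge ends1 _)).
    by rewrite !inE -h1 fF andbT; apply: contraNneq ne => ->; rewrite inE.
  + by rewrite !p1_map2.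
  + by rewrite !p1_map2.
- rewrite h2 => eF; move/implyP: (a2 e) => /(_ eF) nc; apply/negP => C.
  move/negP: nc; apply.
  have := connect_map (f := @p2 _ _ u v) (e' := adjF ends2 (F2 :\ e)) _ C; rewrite /= !p2_map2; apply.
  move=> x y /adj_inv [[f|f]]; rewrite inE => /andP [ne fF] [[-> ->]|[-> ->]] /=.
  + by [].
  + by [].
  + rewrite !p2_map2; apply: connect1; apply: (proj1 (adj_edge ends2 _)).
    by rewrite !inE -h2 fF andbT; apply: contraNneq ne => ->; rewrite inE.
  + rewrite !p2_map2; apply: connect1; apply: (proj2 (adj_edge ends2 _)).
    by rewrite !inE -h2 fF andbT; apply: contraNneq ne => ->; rewrite inE.
Qed.

End GlueProofs.

Lemma modwin a j M : a < M -> j < M ->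
  (a + M - j) %% M = (if j <= a then a - j else a + M - j).
Proof.
move=> aM jM; case: leqP => h.
  by rewrite -addnBAC // modnDr modn_small // ltn_subLR; lia.
by rewrite modn_small //; lia.
Qed.

Lemma ar_l (a j i b m M n N jj : nat) : a < m -> j < m -> M = m + m -> N = n + n.-1 ->
  b < 2 -> b + j * 2 = i -> (if b == 0 then jj = j else jj = (j.+1) %% m) ->
  ((if i <= 2 * a then 2 * a - i else 2 * a + M - i) < N.-1) =
  ((if jj <= a then a - jj else a + m - jj) < n.-1).
Proof.
move=> am jm -> -> b2 hi; case: eqP => [b0 ->|b1 ->].
  by case: ifP => ?; case: ifP => ?; apply/idP/idP => ?; lia.
have [h|h] : ((j.+1 %% m = j.+1) /\ j.+1 < m) \/ (j.+1 %% m = 0 /\ j.+1 = m).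
  case: (ltnP j.+1 m) => h; first by left; rewrite modn_small.
  right; have ee : j.+1 = m by lia.
  by rewrite ee modnn.
all: case: h => ? ?; by case: ifP => ?; case: ifP => ?; apply/idP/idP => ?; lia.
Qed.

Lemma ar_r (a j i b m m' M n n' N : nat) : a < m' -> j < m -> m' = m -> n' = n ->
  M = m + m -> N = n + n.-1 -> b < 2 -> b + j * 2 = i ->
  ((if i <= (2 * a).+1 then (2 * a).+1 - i else (2 * a).+1 + M - i) < N.-1) =
  ((if j <= a then a - j else a + m' - j) < n'.-1).
Proof.
move=> am jm -> -> -> -> b2 hi.
by case: ifP => ?; case: ifP => ?; apply/idP/idP => ?; lia.
Qed.

Theorem mainTheorem3 (V1 E1 V2 E2 : finType)
    (ends1 : E1 -> V1 * V1) (ends2 : E2 -> V2 * V2) :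
  cyclically_orderable ends1 -> cyclically_orderable ends2 ->
  #|V1| = #|V2| -> #|E1| = #|E2| ->
  forall (u : V1) (v : V2),
    cyclically_orderable (glue_ends ends1 ends2 u v).
Proof.
move=> [c1 [O1 [b1 w1]]] [c2 [O2 [b2 w2]]] hV hE u v.
split.
  by apply: (@glue_conn _ _ _ _ ends1 ends2 u v setT setT setT) => // e _; rewrite inE.
have cardE : #|{: E1 + E2}| = #|E1| + #|E1| by rewrite card_sum hE.
have n0 : 0 < #|V1| by apply/card_gt0P; exists u.
have cardV : #|glueV V1 v| = #|V1| + #|V1|.-1.
  by rewrite card_sum card_sig cardC1 hV.
have h1 : forall e, 2 * O1 e < #|{: E1 + E2}|.
  by move=> e; have := ltn_ord (O1 e); rewrite cardE; lia.
have h2 : forall e, (2 * O2 e).+1 < #|{: E1 + E2}|.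
  by move=> e; have := ltn_ord (O2 e); rewrite cardE; lia.
pose O := fun e : (E1 + E2)%type => match e with
  | inl a => Ordinal (h1 a) | inr b => Ordinal (h2 b) end.
exists O; split.
  apply: inj_card_bij; last by rewrite card_ord.
  move=> [a|a] [b|b] /(congr1 val) /= eq.
  - by congr inl; apply: (bij_inj b1); apply: val_inj => /=; lia.
  - lia.
  - lia.
  - by congr inr; apply: (bij_inj b2); apply: val_inj => /=; lia.
case=> i iE0.
have hi := odd_double_half i; rewrite -muln2 in hi.
have iE := iE0; rewrite cardE in iE.
have hk : i./2 < #|E1| by lia.
have m0 : 0 < #|E1| by lia.
have hk2 : i./2 < #|E2| by rewrite -hE.
case: (odd i) hi => /= hi; last first.
- apply: (@glue_tree _ _ _ _ ends1 ends2 u v _ (cbo_window V1 O1 (Ordinal hk)) (cbo_window V2 O2 (Ordinal hk2))); last 2 first.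
  + exact: w1.
  + exact: w2.
  + move=> e; rewrite !inE /= modwin ?ltn_ord ?h1 // modwin ?ltn_ord //=.
    apply: (ar_l (j := i./2) (b := 0)); first [exact: ltn_ord | exact: hk | exact: hk2 | exact: cardE | exact: cardV | exact: (esym hE) | exact: (esym hV) | exact: hi | done].
  + move=> e; rewrite !inE /= modwin ?ltn_ord ?h2 // modwin ?ltn_ord //=.
    apply: (ar_r (m := #|E1|) (n := #|V1|) (j := i./2) (b := 0)); first [exact: ltn_ord | exact: hk | exact: hk2 | exact: cardE | exact: cardV | exact: (esym hE) | exact: (esym hV) | exact: hi | done].
- have j1 : (i./2).+1 %% #|E1| < #|E1| by rewrite ltn_pmod.
  apply: (@glue_tree _ _ _ _ ends1 ends2 u v _ (cbo_window V1 O1 (Ordinal j1)) (cbo_window V2 O2 (Ordinal hk2))); last 2 first.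
  + exact: w1.
  + exact: w2.
  + move=> e; rewrite !inE /= modwin ?ltn_ord ?h1 // modwin ?ltn_ord //=.
    apply: (ar_l (j := i./2) (b := 1)); first [exact: ltn_ord | exact: hk | exact: hk2 | exact: cardE | exact: cardV | exact: (esym hE) | exact: (esym hV) | exact: hi | done].
  + move=> e; rewrite !inE /= modwin ?ltn_ord ?h2 // modwin ?ltn_ord //=.
    apply: (ar_r (m := #|E1|) (n := #|V1|) (j := i./2) (b := 1)); first [exact: ltn_ord | exact: hk | exact: hk2 | exact: cardE | exact: cardV | exact: (esym hE) | exact: (esym hV) | exact: hi | done].
Qed.
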